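(* On the open subset of $\mathbb{R}^4$ with coordinates $(u_1,u_2,p_{u_1},p_{u_2})$ where $u_1\neq u_2$, with canonical Poisson bracket $\{u_i,p_{u_j}\}=\delta_{ij}$, $\{u_1,u_2\}=\{p_{u_1},p_{u_2}\}=0$, let $$H=\frac{u_1(2u_1+u_2)p_{u_1}^2}{u_1-u_2}+\frac{u_2(u_1+2u_2)p_{u_2}^2}{u_2-u_1}-2u_1^2-3u_1u_2-2u_2^2$$ and $$\begin{aligned}K=\frac{u_1^2u_2^2}{(u_2-u_1)^3}\Big(&(3u_1+u_2)p_{u_1}^4-(u_1+3u_2)p_{u_2}^4-8u_1p_{u_1}^3p_{u_2}+8u_2p_{u_1}p_{u_2}^3+6(u_1-u_2)p_{u_1}^2p_{u_2}^2\\&-2(u_1-u_2)(u_1+3u_2)p_{u_1}^2+8(u_1^2-u_2^2)p_{u_1}p_{u_2}-2(u_1-u_2)(3u_1+u_2)p_{u_2}^2-(u_1-u_2)^3\Big).\end{aligned}$$ Then $\{H,K\}=0$; i.e. $H$ (a natural Hamiltonian, quadratic in momenta) and $K$ (quartic in momenta) define an integrable system with two degrees of freedom.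
   Context: The canonical Poisson bracket is $\{f,g\}=\sum_{i=1}^2\left(\frac{\partial f}{\partial u_i}\frac{\partial g}{\partial p_{u_i}}-\frac{\partial f}{\partial p_{u_i}}\frac{\partial g}{\partial u_i}\right)$. *)

(* Defs.v *)
From Stdlib Require Import Reals Lra.
Open Scope R_scope.

Definition H (u1 u2 p1 p2 : R) : R :=
  u1 * (2*u1 + u2) * p1^2 / (u1 - u2)
  + u2 * (u1 + 2*u2) * p2^2 / (u2 - u1)
  - 2*u1^2 - 3*u1*u2 - 2*u2^2.

Definition K (u1 u2 p1 p2 : R) : R :=
  u1^2 * u2^2 / (u2 - u1)^3 *
  ( (3*u1 + u2) * p1^4 - (u1 + 3*u2) * p2^4
    - 8*u1 * p1^3 * p2 + 8*u2 * p1 * p2^3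
    + 6*(u1 - u2) * p1^2 * p2^2
    - 2*(u1 - u2)*(u1 + 3*u2) * p1^2
    + 8*(u1^2 - u2^2) * p1 * p2
    - 2*(u1 - u2)*(3*u1 + u2) * p2^2
    - (u1 - u2)^3 ).

Definition has_partials (F : R -> R -> R -> R -> R) (u1 u2 p1 p2 d1 d2 d3 d4 : R) : Prop :=
  derivable_pt_lim (fun t => F t u2 p1 p2) u1 d1 /\
  derivable_pt_lim (fun t => F u1 t p1 p2) u2 d2 /\
  derivable_pt_lim (fun t => F u1 u2 t p2) p1 d3 /\
  derivable_pt_lim (fun t => F u1 u2 p1 t) p2 d4.

(* Canonical Poisson bracket {F,G} = sum_i (dF/du_i dG/dp_i - dF/dp_i dG/du_i),
   given the partial derivatives (a_i of F, b_i of G). *)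
Definition poisson_from_partials (a1 a2 a3 a4 b1 b2 b3 b4 : R) : R :=
  (a1 * b3 - a3 * b1) + (a2 * b4 - a4 * b2).

(* Main.v *)
Require Import Defs.
From Stdlib Require Import Reals Lra.
From Coquelicot Require Import Coquelicot.
Open Scope R_scope.

Ltac sidec :=
  match goal with h : ?a <> ?b |- _ =>
    assert (a - b <> 0) by lra; assert (b - a <> 0) by lra;
    repeat split;
    repeat (apply Rmult_integral_contrapositive_currified);
    try (replace (b + - a) with (b - a) by ring; assumption);
    try (replace (a + - b) with (a - b) by ring; assumption);
    try lra
  end.

Ltac dpart := apply is_derive_Reals; auto_derive; [ sidec | reflexivity ].

Theorem mainTheorem4 :
  forall u1 u2 p1 p2 : R, u1 <> u2 ->
  exists a1 a2 a3 a4 b1 b2 b3 b4 : R,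
    has_partials H u1 u2 p1 p2 a1 a2 a3 a4 /\
    has_partials K u1 u2 p1 p2 b1 b2 b3 b4 /\
    poisson_from_partials a1 a2 a3 a4 b1 b2 b3 b4 = 0.
Proof.
  intros u1 u2 p1 p2 Hne.
  do 8 eexists.
  split; [|split].
  - unfold has_partials, H; repeat split; dpart.
  - unfold has_partials, K; repeat split; dpart.
  - unfold poisson_from_partials.
    assert (u1 - u2 <> 0) by lra.
    assert (u2 - u1 <> 0) by lra.
    field. split; lra.
Qed.
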